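(* Let $\mathcal L$ be a linearly ordered non-discrete MV-algebra and let $0<p<q<1$ in $L$. Then $$\,]q,1]\sqsubseteq\!\!\to\,]p,1]=[q\to p,1].$$
   Context: $\mathcal L=(L,\oplus,\lnot,0)$ is a linearly ordered MV-algebra. We write $1=\lnot 0$ and $x\to y=\lnot x\oplus y$. Non-discrete means no element has an immediate successor or an immediate predecessor. We write $[p,1]=\{x: x\ge p\}$ and $]p,1]=\{x:x>p\}$. For an upward-closed $\mathcal F$ and $a\in L$, let $\mathcal F_a=\{z:z\to a\notin\mathcal F\}$. For upward-closed $\mathcal F\subseteq\mathcal G$ we put $\mathcal F\sqsubseteq\!\!\to\mathcal G=\bigcap_{a\in L\setminus\mathcal G}\mathcal F_a$. *)

(* Defs.v *)
Set Implicit Arguments.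

(* MV-algebras (Chang / Mundici axiomatization). *)
Record MVAlgebra := MkMV {
  mv_car :> Type;
  mv_oplus : mv_car -> mv_car -> mv_car;
  mv_neg : mv_car -> mv_car;
  mv_zero : mv_car;
  mv_assoc : forall x y z, mv_oplus x (mv_oplus y z) = mv_oplus (mv_oplus x y) z;
  mv_comm : forall x y, mv_oplus x y = mv_oplus y x;
  mv_zero_r : forall x, mv_oplus x mv_zero = x;
  mv_negK : forall x, mv_neg (mv_neg x) = x;
  mv_one_abs : forall x, mv_oplus x (mv_neg mv_zero) = mv_neg mv_zero;
  mv_luk : forall x y,
    mv_oplus (mv_neg (mv_oplus (mv_neg x) y)) y =
    mv_oplus (mv_neg (mv_oplus (mv_neg y) x)) x
}.

Section MVDefs.
Variable A : MVAlgebra.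

Definition mv_one : A := mv_neg A (mv_zero A).
Definition mv_impl (x y : A) : A := mv_oplus A (mv_neg A x) y.
Definition mv_le (x y : A) : Prop := mv_impl x y = mv_one.
Definition mv_lt (x y : A) : Prop := mv_le x y /\ x <> y.

Definition linearly_ordered : Prop := forall x y : A, mv_le x y \/ mv_le y x.

Definition imm_succ (x y : A) : Prop :=
  mv_lt x y /\ forall z, ~ (mv_lt x z /\ mv_lt z y).
Definition imm_pred (x y : A) : Prop :=
  mv_lt y x /\ forall z, ~ (mv_lt y z /\ mv_lt z x).

Definition non_discrete : Prop :=
  forall x : A, (~ exists y, imm_succ x y) /\ (~ exists y, imm_pred x y).

Definition upward_closed (F : A -> Prop) : Prop :=
  forall x y, F x -> mv_le x y -> F y.

Definition closed_up (p : A) : A -> Prop := fun x => mv_le p x.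
Definition open_up (p : A) : A -> Prop := fun x => mv_lt p x.

(* F_a = { z : z -> a \notin F } *)
Definition Fsub (F : A -> Prop) (a : A) : A -> Prop :=
  fun z => ~ F (mv_impl z a).

(* F ⊑→ G = intersection over a \in L \ G of F_a *)
Definition sqimpl (F G : A -> Prop) : A -> Prop :=
  fun z => forall a : A, ~ G a -> Fsub F a z.

End MVDefs.

(* Main.v *)
Require Import Defs.
From Stdlib Require Import Classical.

Section L.
Variable A : MVAlgebra.
Local Notation "x + y" := (mv_oplus A x y).
Local Notation "~~ x" := (mv_neg A x) (at level 35, right associativity).
Local Notation O := (mv_zero A).
Local Notation I := (mv_one A).

Lemma negO : ~~ I = O.
Proof. unfold mv_one. apply mv_negK. Qed.

Lemma zero_l x : O + x = x.
Proof. rewrite mv_comm. apply mv_zero_r. Qed.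

Lemma one_l x : I + x = I.
Proof. rewrite mv_comm. apply mv_one_abs. Qed.

Lemma le_refl x : mv_le A x x.
Proof.
  unfold mv_le, mv_impl.
  pose proof (mv_luk A x I) as H.
  unfold mv_one in H.
  rewrite !mv_one_abs, (mv_negK A O), zero_l in H.
  symmetry. exact H.
Qed.

Lemma le_antisym x y : mv_le A x y -> mv_le A y x -> x = y.
Proof.
  unfold mv_le, mv_impl. intros H1 H2.
  pose proof (mv_luk A x y) as H. rewrite H1, H2, negO, !zero_l in H. auto.
Qed.

Lemma le_plus u w : mv_le A u (u + w).
Proof.
  unfold mv_le, mv_impl. rewrite mv_assoc. pose proof (le_refl u) as H.
  unfold mv_le, mv_impl in H. rewrite H. apply one_l.
Qed.

Lemma le_decomp y z : mv_le A y z -> z = y + ~~ (~~ z + y).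
Proof.
  unfold mv_le, mv_impl. intros H.
  pose proof (mv_luk A y z) as E. rewrite H, negO, zero_l in E.
  transitivity (~~ (~~ z + y) + y); [exact E | apply mv_comm].
Qed.

Lemma le_trans x y z : mv_le A x y -> mv_le A y z -> mv_le A x z.
Proof.
  intros H1 H2. rewrite (le_decomp _ _ H2).
  unfold mv_le, mv_impl in *. rewrite mv_assoc, H1. apply one_l.
Qed.

Lemma le_plus_mono a b c : mv_le A a b -> mv_le A (a + c) (b + c).
Proof.
  intros H. rewrite (le_decomp _ _ H).
  rewrite <- mv_assoc, (mv_comm _ (~~ _) c), mv_assoc. apply le_plus.
Qed.

Lemma le_neg x y : mv_le A x y -> mv_le A (~~ y) (~~ x).
Proof. unfold mv_le, mv_impl. rewrite mv_negK, mv_comm. auto. Qed.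

Lemma impl_mono2 x a p : mv_le A a p -> mv_le A (mv_impl A x a) (mv_impl A x p).
Proof.
  intros H. unfold mv_impl. rewrite !(mv_comm _ (~~ x)). apply le_plus_mono; auto.
Qed.

Lemma impl_anti1 x y p : mv_le A y x -> mv_le A (mv_impl A x p) (mv_impl A y p).
Proof. intros H. unfold mv_impl. apply le_plus_mono, le_neg; auto. Qed.

Lemma impl_impl p q : mv_le A p q -> mv_impl A (mv_impl A q p) p = q.
Proof.
  unfold mv_le, mv_impl. intros H. rewrite mv_luk, H, negO. apply zero_l.
Qed.

Lemma impl_le_one x p : mv_le A x p -> mv_impl A x p = I.
Proof. auto. Qed.

Lemma le_one x : mv_le A x I.
Proof. unfold mv_le, mv_impl. apply mv_one_abs. Qed.

End L.

Theorem mainTheorem14 (A : MVAlgebra) (p q : A) :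
  linearly_ordered A -> non_discrete A ->
  @mv_lt A (mv_zero A) p -> @mv_lt A p q -> @mv_lt A q (@mv_one A) ->
  forall x : A, @sqimpl A (@open_up A q) (@open_up A p) x <-> @closed_up A (@mv_impl A q p) x.
Proof.
  intros Hlin _ [H0p _] [Hpq Hpq'] [Hq1 Hq1'] x.
  unfold sqimpl, Fsub, open_up, closed_up. split.
  - intros H.
    assert (Hn : ~ mv_lt A q (mv_impl A x p)).
    { apply H. intros [_ E]. apply E; reflexivity. }
    assert (Hle : mv_le A (mv_impl A x p) q).
    { destruct (Hlin (mv_impl A x p) q) as [h|h]; auto.
      destruct (classic (q = mv_impl A x p)) as [E|E].
      + rewrite <- E. apply le_refl.
      + exfalso. apply Hn. split; auto. }
    destruct (Hlin x p) as [h|h].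
    + exfalso. apply Hq1'. apply le_antisym; auto.
      rewrite <- (impl_le_one _ _ _ h). exact Hle.
    + rewrite <- (impl_impl _ _ _ h). apply impl_anti1. exact Hle.
  - intros H a Ha [Hqa Hqa'].
    assert (Hap : mv_le A a p).
    { destruct (Hlin a p) as [h|h]; auto.
      destruct (classic (p = a)) as [E|E].
      + rewrite <- E. apply le_refl.
      + exfalso. apply Ha. split; auto. }
    apply Hqa'. apply le_antisym; auto.
    eapply le_trans. apply impl_mono2. exact Hap.
    rewrite <- (impl_impl _ _ _ Hpq) at 1. apply impl_anti1. exact H.
Qed.
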